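(* Let $d\ge 3$, $\lambda>0$ with $\log d\lesssim\lambda\lesssim d$, $\rho_0=\log^{-c_0}d$ for a constant $c_0>0$, $\mu=\rho_0/(d+\lambda)$, and let $(a,b,c)$ solve \[ \dot a=a(24-16a-8r),\quad \dot b=8(1+\lambda)(1-r)b-16(1+\lambda)^2b^2,\quad \dot c=8(1-r)c-16c^2, \] with $r=a+(1+\lambda)b+(d-2)c$ and $a(0)=b(0)=c(0)=\mu$. Fix $\rho\in(0,1/12)$, $\varepsilon\in(0,1/4]$ and define $T_{1a}=\inf\{t\ge0:r(t)\ge\rho\}$, $T_1=\inf\{t\ge T_{1a}:\dot b(t)\le0\}$, $T_{2a}=\inf\{t\ge T_1:r(t)\ge1-\varepsilon\}$, $T_2=\inf\{t\ge T_{2a}:a(t)\ge\rho\}$. Then, for $d$ large enough: (1) $T_2-T_{2a}=\Theta\big(\log(1/a(T_{2a}))\big)=\Theta(\log d)$; (2) $\mathrm{Align}(T_2)=1-O(\lambda^{-2})-o(1)$.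
   Context: This ODE is the population gradient flow of the phase-retrieval model $y=(x^\top w_\star)^2+\nu$, $x\sim\mathcal N(0,I_d+\lambda vv^\top)$ ($v\perp w_\star$ unit vectors), with network $f_W(x)=\sum_{j=1}^d(w_j^\top x)^2$, in the coordinates $WW^\top=a\,w_\star w_\star^\top+b\,vv^\top+c(I-w_\star w_\star^\top-vv^\top)$, started from $WW^\top=\mu I_d$. The alignment is $\mathrm{Align}(t)=a(t)/\sqrt{a(t)^2+b(t)^2+(d-2)c(t)^2}$. Asymptotic notation refers to $d\to\infty$ with $\varepsilon,\rho$ fixed. *)

(* Defs.v *)
From Stdlib Require Import Reals.
From Coquelicot Require Import Coquelicot.
Open Scope R_scope.

Definition rfun (d : nat) (lam : R) (a b c : R -> R) (t : R) : R :=
  a t + (1 + lam) * b t + (INR d - 2) * c t.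

Definition is_solution (d : nat) (lam mu : R) (a b c : R -> R) : Prop :=
  a 0 = mu /\ b 0 = mu /\ c 0 = mu /\
  forall t, 0 <= t ->
    is_derive a t (a t * (24 - 16 * a t - 8 * rfun d lam a b c t)) /\
    is_derive b t (8 * (1 + lam) * (1 - rfun d lam a b c t) * b t
                   - 16 * (1 + lam) ^ 2 * b t ^ 2) /\
    is_derive c t (8 * (1 - rfun d lam a b c t) * c t - 16 * c t ^ 2).

(* T = inf { t >= t0 : P t }, the infimum being attained (first hitting time). *)
Definition first_hit (P : R -> Prop) (t0 T : R) : Prop :=
  t0 <= T /\ P T /\ forall t, t0 <= t < T -> ~ P t.

Definition Align (d : nat) (a b c : R -> R) (t : R) : R :=
  a t / sqrt (a t ^ 2 + b t ^ 2 + (INR d - 2) * c t ^ 2).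

(* Main.v *)
Require Import Defs.
From Stdlib Require Import Reals Lra Psatz Classical.
From Coquelicot Require Import Coquelicot.
Open Scope R_scope.


Lemma cont_of_der f t l : is_derive f t l -> continuity_pt f t.
Proof.
  intro H. apply is_derive_Reals in H.
  apply derivable_continuous_pt. exact (exist _ l H).
Qed.

Lemma mono (f f' : R -> R) s t : s <= t ->
  (forall x, s <= x <= t -> is_derive f x (f' x)) ->
  (forall x, s < x < t -> 0 <= f' x) -> f s <= f t.
Proof.
  intros Hst Hd Hp. destruct (Req_dec s t) as [->|Hne]; [lra|].
  destruct (MVT_cor2 f f' s t) as [c [Hc1 Hc2]]; [lra| |].
  - intros c Hc. apply is_derive_Reals. auto.
  - specialize (Hp c Hc2). nra.
Qed.

Lemma der_mexp (x : R -> R) x' k u : is_derive x u x' ->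
  is_derive (fun v => x v * exp (- k * v)) u (exp (- k * u) * (x' - k * x u)).
Proof.
  intro H.
  assert (He : is_derive (fun v => exp (- k * v)) u (- k * exp (- k * u))).
  { apply (is_derive_comp exp (fun v => -k * v) u (exp (-k*u)) (-k)).
    - apply is_derive_exp.
    - auto_derive; auto; ring. }
  eapply is_derive_ext. { intro v. reflexivity. }
  replace (exp (- k * u) * (x' - k * x u)) with (plus (mult x' (exp (-k*u))) (mult (x u) (- k * exp (- k * u)))).
  2:{ unfold plus, mult; simpl. ring. }
  apply (is_derive_mult x (fun v => exp (-k*v))); auto.
  intros; apply Rmult_comm.
Qed.

Lemma growth_lo (x x' : R -> R) k s t : s <= t ->
  (forall u, s <= u <= t -> is_derive x u (x' u)) ->
  (forall u, s < u < t -> k * x u <= x' u) ->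
  x s * exp (k * (t - s)) <= x t.
Proof.
  intros Hst Hd Hk.
  assert (H := mono (fun v => x v * exp (- k * v)) (fun u => exp (- k * u) * (x' u - k * x u)) s t Hst).
  simpl in H.
  assert (H' : x s * exp (- k * s) <= x t * exp (- k * t)).
  { apply H. - intros; apply der_mexp; auto.
    - intros u Hu. specialize (Hk u Hu). apply Rmult_le_pos. left; apply exp_pos. lra. }
  apply Rmult_le_compat_r with (r := exp (k * t)) in H'. 2: left; apply exp_pos.
  rewrite Rmult_assoc, <- exp_plus in H'. rewrite Rmult_assoc, <- exp_plus in H'.
  replace (- k * t + k * t) with 0 in H' by ring. rewrite exp_0 in H'.
  replace (- k * s + k * t) with (k * (t - s)) in H' by ring. lra.
Qed.

Lemma growth_hi (x x' : R -> R) k s t : s <= t ->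
  (forall u, s <= u <= t -> is_derive x u (x' u)) ->
  (forall u, s < u < t -> x' u <= k * x u) ->
  x t <= x s * exp (k * (t - s)).
Proof.
  intros Hst Hd Hk.
  assert (H := growth_lo (fun v => - x v) (fun v => - x' v) k s t Hst).
  simpl in H.
  assert (- x s * exp (k * (t - s)) <= - x t).
  { apply H. - intros u Hu. apply (is_derive_opp x). auto.
    - intros u Hu. specialize (Hk u Hu). lra. }
  lra.
Qed.

Lemma first_hit_le (P : R -> Prop) t0 T t1 : first_hit P t0 T -> t0 <= t1 -> P t1 -> T <= t1.
Proof.
  intros [H1 [H2 H3]] H4 H5. destruct (Rle_lt_dec T t1); auto.
  exfalso; apply (H3 t1); auto; lra.
Qed.

Lemma first_hit_ex (h : R -> R) t0 t1 : t0 <= t1 ->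
  (forall t, t0 <= t -> continuity_pt h t) -> 0 <= h t1 ->
  exists T, first_hit (fun t => 0 <= h t) t0 T /\ T <= t1.
Proof.
  intros H01 Hc Ht1.
  set (E := fun t => t0 <= t /\ forall s, t0 <= s < t -> h s < 0).
  assert (Hb : bound E).
  { exists t1. intros t [Ht Hs]. destruct (Rle_lt_dec t t1); auto.
    specialize (Hs t1). assert (h t1 < 0) by (apply Hs; lra). lra. }
  assert (He : exists x, E x).
  { exists t0. split; [lra|]. intros; lra. }
  destruct (completeness E Hb He) as [T [HT1 HT2]].
  assert (Ht0T : t0 <= T) by (apply HT1; split; [lra| intros; lra]).
  assert (HTt1 : T <= t1).
  { apply HT2. intros t [Ht Hs]. destruct (Rle_lt_dec t t1); auto.
    assert (h t1 < 0) by (apply Hs; lra). lra. }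
  assert (Hbefore : forall s, t0 <= s < T -> h s < 0).
  { intros s Hs. destruct (Rlt_le_dec (h s) 0) as [|Hhs]; auto.
    exfalso. assert (T <= s); [|lra].
    apply HT2. intros t [Ht Hst]. destruct (Rle_lt_dec t s); auto.
    assert (h s < 0) by (apply Hst; lra). lra. }
  exists T. split; [|auto]. split; [auto|split].
  - destruct (Rle_lt_dec 0 (h T)) as [|HhT]; auto. exfalso.
    destruct (Hc T Ht0T (- h T)) as [del [Hdel Hd]]; [lra|].
    assert (E (T + del / 2)).
    { split; [lra|]. intros s Hs. destruct (Rlt_le_dec s T); [apply Hbefore; lra|].
      destruct (Req_dec s T) as [->|Hne]; [lra|].
      assert (Hx : R_dist (h s) (h T) < - h T).
      { apply Hd. split; [unfold D_x, no_cond; split; auto|].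
        simpl; unfold R_dist. rewrite Rabs_right; lra. }
      unfold R_dist in Hx. apply Rabs_def2 in Hx. lra. }
    assert (T + del/2 <= T) by (apply HT1; auto). lra.
  - intros t Ht Hh. assert (h t < 0) by (apply Hbefore; auto). lra.
Qed.

Lemma local_decr f T l : is_derive f T l -> l < 0 ->
  exists del, 0 < del /\ forall s, T - del < s < T -> f T < f s.
Proof.
  intros H Hl. apply is_derive_Reals in H.
  destruct (H (- l / 2)) as [del Hd]; [lra|].
  exists (pos del). split; [apply cond_pos|]. intros s Hs.
  assert (Hh : s - T <> 0) by lra.
  assert (Ha : Rabs (s - T) < del) by (rewrite Rabs_left; lra).
  specialize (Hd (s - T) Hh Ha). replace (T + (s - T)) with s in Hd by ring.
  apply Rabs_def2 in Hd. destruct Hd as [Hd1 Hd2].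
  assert (Hq : (f s - f T) / (s - T) < l / 2) by lra.
  assert (Hneg : s - T < 0) by lra.
  apply (Rmult_lt_compat_r (- (s - T))) in Hq; [|lra].
  unfold Rdiv in Hq. 
  replace ((f s - f T) * / (s - T) * - (s - T)) with (- (f s - f T)) in Hq by (field; lra).
  nra.
Qed.

Lemma pos_sol (x G : R -> R) :
  (forall t, 0 <= t -> is_derive x t (x t * G t)) ->
  (forall t, 0 <= t -> continuity_pt G t) -> 0 < x 0 ->
  forall t, 0 <= t -> 0 < x t.
Proof.
  intros Hd Hc H0 t Ht. destruct (Rlt_le_dec 0 (x t)) as [|Hle]; auto. exfalso.
  destruct (first_hit_ex (fun u => - x u) 0 t Ht) as [T [[HT1 [HT2 HT3]] HT4]].
  - intros u Hu. apply continuity_pt_opp. eapply cont_of_der. apply Hd; auto.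
  - lra.
  - simpl in *. assert (HT0 : 0 < T).
    { destruct HT1 as [|<-]; auto. lra. }
    destruct (continuity_ab_min G 0 T) as [mx [Hmx1 Hmx2]]; [lra| intros; apply Hc; lra|].
    assert (Hg := growth_lo x (fun u => x u * G u) (G mx) 0 T HT1).
    assert (x 0 * exp (G mx * (T - 0)) <= x T).
    { apply Hg. - intros u Hu. apply Hd; lra.
      - intros u Hu. assert (0 < x u).
        { destruct (Rlt_le_dec 0 (x u)); auto. exfalso; apply (HT3 u); lra. }
        specialize (Hmx1 u (conj (Rlt_le _ _ (proj1 Hu)) (Rlt_le _ _ (proj2 Hu)))). nra. }
    assert (0 < x 0 * exp (G mx * (T - 0))) by (apply Rmult_lt_0_compat; auto; apply exp_pos).
    lra.
Qed.


Definition ea d lam (a b c : R -> R) t := a t * (24 - 16 * a t - 8 * rfun d lam a b c t).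
Definition eb d lam (a b c : R -> R) t := 8 * (1 + lam) * (1 - rfun d lam a b c t) * b t
                   - 16 * (1 + lam) ^ 2 * b t ^ 2.
Definition ec d lam (a b c : R -> R) t := 8 * (1 - rfun d lam a b c t) * c t - 16 * c t ^ 2.

Lemma cont_of_ex f t : ex_derive f t -> continuity_pt f t.
Proof. intro H. apply continuity_pt_filterlim. apply (ex_derive_continuous f t H). Qed.


Lemma sol_a d lam mu a b c : is_solution d lam mu a b c -> forall t, 0 <= t -> is_derive a t (ea d lam a b c t).
Proof. intros [_ [_ [_ H]]] t Ht. apply (H t Ht). Qed.
Lemma sol_b d lam mu a b c : is_solution d lam mu a b c -> forall t, 0 <= t -> is_derive b t (eb d lam a b c t).
Proof. intros [_ [_ [_ H]]] t Ht. apply (H t Ht). Qed.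
Lemma sol_c d lam mu a b c : is_solution d lam mu a b c -> forall t, 0 <= t -> is_derive c t (ec d lam a b c t).
Proof. intros [_ [_ [_ H]]] t Ht. apply (H t Ht). Qed.

Lemma sol_r d lam mu a b c : is_solution d lam mu a b c -> forall t, 0 <= t ->
  is_derive (rfun d lam a b c) t (ea d lam a b c t + (1 + lam) * eb d lam a b c t + (INR d - 2) * ec d lam a b c t).
Proof.
  intros H t Ht. pose proof (sol_a _ _ _ _ _ _ H t Ht) as Ha.
  pose proof (sol_b _ _ _ _ _ _ H t Ht) as Hb. pose proof (sol_c _ _ _ _ _ _ H t Ht) as Hc.
  unfold rfun. auto_derive.
  - repeat split; eexists; eauto.
  - replace (Derive (fun x => a x) t) with (ea d lam a b c t) by (symmetry; apply is_derive_unique; auto).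
    replace (Derive (fun x => b x) t) with (eb d lam a b c t) by (symmetry; apply is_derive_unique; auto).
    replace (Derive (fun x => c x) t) with (ec d lam a b c t) by (symmetry; apply is_derive_unique; auto).
    ring.
Qed.

Lemma sol_exd d lam mu a b c : is_solution d lam mu a b c -> forall t, 0 <= t ->
  ex_derive a t /\ ex_derive b t /\ ex_derive c t.
Proof.
  intros H t Ht. repeat split; eexists.
  apply (sol_a _ _ _ _ _ _ H t Ht). apply (sol_b _ _ _ _ _ _ H t Ht). apply (sol_c _ _ _ _ _ _ H t Ht).
Qed.

Lemma sol_pos d lam mu a b c : is_solution d lam mu a b c -> 0 < mu ->
  forall t, 0 <= t -> 0 < a t /\ 0 < b t /\ 0 < c t.
Proof.
  intros H Hmu t Ht. pose proof H as [Ha0 [Hb0 [Hc0 _]]].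
  split; [|split].
  - apply (pos_sol a (fun t => 24 - 16 * a t - 8 * rfun d lam a b c t)); auto; [| |lra].
    + intros u Hu. apply (sol_a _ _ _ _ _ _ H u Hu).
    + intros u Hu. destruct (sol_exd _ _ _ _ _ _ H u Hu) as [? [? ?]].
      apply cont_of_ex. unfold rfun. auto_derive. repeat split; auto.
  - apply (pos_sol b (fun t => 8 * (1 + lam) * (1 - rfun d lam a b c t) - 16 * (1 + lam) ^ 2 * b t)); auto; [| |lra].
    + intros u Hu. pose proof (sol_b _ _ _ _ _ _ H u Hu) as Hb. unfold eb in Hb.
      eapply is_derive_ext; [intro; reflexivity|]. 
      replace (b u * (8 * (1 + lam) * (1 - rfun d lam a b c u) - 16 * (1 + lam) ^ 2 * b u)) with
        (8 * (1 + lam) * (1 - rfun d lam a b c u) * b u - 16 * (1 + lam) ^ 2 * b u ^ 2) by ring. exact Hb.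
    + intros u Hu. destruct (sol_exd _ _ _ _ _ _ H u Hu) as [? [? ?]].
      apply cont_of_ex. unfold rfun. auto_derive. repeat split; auto.
  - apply (pos_sol c (fun t => 8 * (1 - rfun d lam a b c t) - 16 * c t)); auto; [| |lra].
    + intros u Hu. pose proof (sol_c _ _ _ _ _ _ H u Hu) as Hb. unfold ec in Hb.
      replace (c u * (8 * (1 - rfun d lam a b c u) - 16 * c u)) with
        (8 * (1 - rfun d lam a b c u) * c u - 16 * c u ^ 2) by ring. exact Hb.
    + intros u Hu. destruct (sol_exd _ _ _ _ _ _ H u Hu) as [? [? ?]].
      apply cont_of_ex. unfold rfun. auto_derive. repeat split; auto.
Qed.

Lemma INR_ge3 d : (3 <= d)%nat -> 3 <= INR d.
Proof. intro H. apply le_INR in H. simpl in H. lra. Qed.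

Lemma sol_r32 d lam mu a b c : is_solution d lam mu a b c -> 0 < mu -> 0 < lam -> (3 <= d)%nat ->
  rfun d lam a b c 0 < 3/2 -> forall t, 0 <= t -> rfun d lam a b c t < 3/2.
Proof.
  intros H Hmu Hlam Hd Hr0 t Ht. apply INR_ge3 in Hd.
  destruct (Rlt_le_dec (rfun d lam a b c t) (3/2)) as [|Hle]; auto. exfalso.
  destruct (first_hit_ex (fun u => rfun d lam a b c u - 3/2) 0 t Ht) as [T [[HT1 [HT2 HT3]] HT4]].
  - intros u Hu. apply cont_of_ex. destruct (sol_exd _ _ _ _ _ _ H u Hu) as [? [? ?]].
    unfold rfun. auto_derive. repeat split; auto.
  - lra.
  - simpl in *. assert (HT0 : 0 < T).
    { destruct HT1 as [|<-]; auto. lra. }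
    destruct (sol_pos _ _ _ _ _ _ H Hmu T (Rlt_le _ _ HT0)) as [Pa [Pb Pc]].
    set (r := rfun d lam a b c) in *.
    assert (Hneg : ea d lam a b c T + (1 + lam) * eb d lam a b c T + (INR d - 2) * ec d lam a b c T < 0).
    { unfold ea, eb, ec. fold r.
      assert (Hrr : r T = a T + (1 + lam) * b T + (INR d - 2) * c T) by reflexivity.
      set (A := a T) in *. set (B := (1 + lam) * b T) in *. set (C := (INR d - 2) * c T) in *.
      assert (PB : 0 < B) by (unfold B; apply Rmult_lt_0_compat; lra). assert (PC : 0 < C) by (unfold C; apply Rmult_lt_0_compat; lra).
      assert (E2 : (1 + lam) * (8 * (1 + lam) * (1 - r T) * b T - 16 * (1 + lam) ^ 2 * b T ^ 2)
                 = 8 * (1 + lam) * B * (1 - r T) - 16 * (1 + lam) * B ^ 2) by (unfold B; ring).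
      assert (E3 : (INR d - 2) * (8 * (1 - r T) * c T - 16 * c T ^ 2)
                 = 8 * C * (1 - r T) - 16 * (INR d - 2) * c T ^ 2) by (unfold C; ring).
      rewrite E2, E3.
      assert (Hr1 : 1 - r T <= - 1/2) by lra.
      assert (X : 0 < (1 + lam) * B) by (apply Rmult_lt_0_compat; lra).
      assert (8 * (1 + lam) * B * (1 - r T) <= - 4 * B).
      { replace (8 * (1 + lam) * B * (1 - r T)) with (8 * ((1 + lam) * B) * (1 - r T)) by ring.
        assert (8 * ((1 + lam) * B) * (1 - r T) <= 8 * ((1 + lam) * B) * (-1/2)).
        { apply Rmult_le_compat_l; lra. }
        nra. }
      assert (0 <= 16 * (1 + lam) * B ^ 2) by (apply Rmult_le_pos; [lra| apply pow2_ge_0]).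
      assert (0 <= 16 * (INR d - 2) * c T ^ 2) by (apply Rmult_le_pos; [lra| apply pow2_ge_0]).
      assert (8 * C * (1 - r T) <= - 4 * C) by nra.
      assert (A * (24 - 16 * A - 8 * r T) <= A * (12 - 16 * A)) by (apply Rmult_le_compat_l; lra).
      assert (16 * A - 16 * A ^ 2 - 6 < 0) by (assert (0 <= (A - 1/2)^2) by apply pow2_ge_0; nra).
      lra. }
    destruct (local_decr _ _ _ (sol_r _ _ _ _ _ _ H T (Rlt_le _ _ HT0)) Hneg) as [del [Hdel Hs]].
    set (s := T - Rmin del T / 2).
    assert (Hm1 : Rmin del T <= del) by apply Rmin_l. assert (Hm2 : Rmin del T <= T) by apply Rmin_r.
    assert (Hm3 : 0 < Rmin del T) by (apply Rmin_pos; lra).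
    assert (Hx : T - del < s < T) by (unfold s; lra).
    specialize (Hs s Hx). change (rfun d lam a b c) with r in Hs.
    assert (Hx2 : 0 <= s < T) by (unfold s; lra).
    apply (HT3 s Hx2). lra.
Qed.

Lemma cont_r d lam mu a b c : is_solution d lam mu a b c -> forall t, 0 <= t ->
  continuity_pt (rfun d lam a b c) t.
Proof.
  intros H t Ht. destruct (sol_exd _ _ _ _ _ _ H t Ht) as [? [? ?]].
  apply cont_of_ex. unfold rfun. auto_derive. repeat split; auto.
Qed.

Lemma cont_eb d lam mu a b c : is_solution d lam mu a b c -> forall t, 0 <= t ->
  continuity_pt (fun u => - eb d lam a b c u) t.
Proof.
  intros H t Ht. destruct (sol_exd _ _ _ _ _ _ H t Ht) as [? [? ?]].
  apply cont_of_ex. unfold eb, rfun. auto_derive. repeat split; auto.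
Qed.

Lemma cont_a d lam mu a b c : is_solution d lam mu a b c -> forall t, 0 <= t ->
  continuity_pt a t.
Proof.
  intros H t Ht. destruct (sol_exd _ _ _ _ _ _ H t Ht) as [? [? ?]].
  apply cont_of_ex. auto.
Qed.


Lemma first_hit_iff (P Q : R -> Prop) t0 T :
  (forall t, t0 <= t -> (P t <-> Q t)) -> first_hit P t0 T -> first_hit Q t0 T.
Proof.
  intros H [H1 [H2 H3]]. split; [auto|split].
  - apply H; auto.
  - intros t Ht HQ. apply (H3 t Ht). apply H; [lra|auto].
Qed.

Lemma align_bound (A X rho : R) : 0 < rho -> rho <= A -> 0 <= X ->
  Rabs (A / sqrt (A ^ 2 + X) - 1) <= X / (2 * rho ^ 2).
Proof.
  intros Hr HA HX.
  set (s := sqrt (A ^ 2 + X)).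
  assert (Hs2 : s * s = A ^ 2 + X) by (apply sqrt_sqrt; nra).
  assert (Hs0 : 0 <= s) by apply sqrt_pos.
  assert (HsA : A <= s) by nra.
  assert (Hsp : 0 < s) by lra.
  assert (Hq : A / s <= 1).
  { apply (Rmult_le_reg_r s); [lra|]. replace (A / s * s) with A by (field; lra). lra. }
  assert (Hq0 : 0 < A / s) by (apply Rdiv_lt_0_compat; lra).
  rewrite Rabs_left1 by lra.
  assert (E : 1 - A / s = (s - A) / s) by (field; lra).
  assert (Hsm : (s - A) * (s + A) = X) by nra.
  assert (H1 : (s - A) / s <= (s - A) / A).
  { apply Rmult_le_compat_l; [lra|]. apply Rinv_le_contravar; lra. }
  assert (H2 : (s - A) / A <= X / (2 * A ^ 2)).
  { apply (Rmult_le_reg_r (2 * A ^ 2)); [nra|].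
    replace ((s - A) / A * (2 * A ^ 2)) with (2 * A * (s - A)) by (field; lra).
    replace (X / (2 * A ^ 2) * (2 * A ^ 2)) with X by (field; lra). nra. }
  assert (H3 : X / (2 * A ^ 2) <= X / (2 * rho ^ 2)).
  { apply Rmult_le_compat_l; [lra|]. apply Rinv_le_contravar; nra. }
  lra.
Qed.

Lemma exp_le_m x y : x <= y -> exp x <= exp y.
Proof. intro H. destruct (Req_dec x y) as [->|]; [lra|]. left; apply exp_increasing; lra. Qed.


Lemma core (c0 k1 k2 rho eps : R) (d : nat) lam (a b c : R -> R) :
  0 < c0 -> 0 < k1 -> 0 < k2 -> 0 < rho < 1/12 -> 0 < eps <= 1/4 ->
  (3 <= d)%nat -> 0 < lam -> k1 * ln (INR d) <= lam <= k2 * INR d ->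
  1 <= ln (INR d) ->
  3 / (2 * (INR d - 2)) <= rho / 4 -> 3 / (2 * (INR d - 2)) <= eps / 4 ->
  (1 + k2) * exp (c0 * ln (ln (INR d))) <= INR d ->
  exp (- c0 * ln (ln (INR d)) + 8 / (3 * k1)) <= rho / 4 ->
  24 * (1 / (3 * k1) + (c0 * ln (ln (INR d)) + ln (3 * (1 + k2))) / (4 * rho)
        + (1 + c0 * ln (ln (INR d)) + ln (3 * (1 + k2))) / (4 * eps)) <= ln (INR d) / 2 ->
  exp (- (ln (INR d) / 2)) <= rho ^ 2 ->
  is_solution d lam (Rpower (ln (INR d)) (- c0) / (INR d + lam)) a b c ->
      exists T1a T1 T2a T2 : R,
        first_hit (fun t => rho <= rfun d lam a b c t) 0 T1a /\
        first_hit (fun t => Derive b t <= 0) T1a T1 /\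
        first_hit (fun t => 1 - eps <= rfun d lam a b c t) T1 T2a /\
        first_hit (fun t => rho <= a t) T2a T2 /\
        1/48 * ln (1 / a T2a) <= T2 - T2a <= 1/10 * ln (1 / a T2a) /\
        1/96 * ln (INR d) <= T2 - T2a <= 1/5 * ln (INR d) /\
        Rabs (Align d a b c T2 - 1) <= 9 / (8 * rho ^ 2) / lam ^ 2 + 9 / (8 * rho ^ 2) * / (INR d - 2).
Proof.
  intros Hc0 Hk1 Hk2 Hrho Heps Hd Hlam [Hlam1 Hlam2] Hl1 K1a K1b K2 K3 K4 K5 Hsol.
  pose proof (INR_ge3 d Hd) as HD.
  set (D := INR d) in *.
  set (l := ln D) in *.
  set (sg := ln l) in *.
  assert (Hsg : 0 <= sg) by (unfold sg; rewrite <- ln_1; apply ln_le; lra).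
  set (rho0 := exp (- c0 * sg)).
  assert (Hrho0 : Rpower l (- c0) = rho0) by (unfold Rpower, rho0; reflexivity).
  rewrite Hrho0 in Hsol.
  assert (Hr0p : 0 < rho0) by apply exp_pos.
  assert (Hr01 : rho0 <= 1) by (unfold rho0; rewrite <- exp_0; apply exp_le_m; nra).
  assert (Hr0inv : rho0 * exp (c0 * sg) = 1).
  { unfold rho0; rewrite <- exp_plus. replace (- c0 * sg + c0 * sg) with 0 by ring. apply exp_0. }
  assert (HexpL : exp l = D) by (unfold l; apply exp_ln; lra).
  set (mu := rho0 / (D + lam)) in *.
  assert (Hmu : 0 < mu) by (unfold mu; apply Rdiv_lt_0_compat; lra).
  assert (HmuD : mu * D <= 1).
  { unfold mu. apply (Rmult_le_reg_r (D + lam)); [lra|].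
    replace (rho0 / (D + lam) * D * (D + lam)) with (rho0 * D) by (field; lra). nra. }
  assert (HmuD2 : 1 <= mu * exp (2 * l)).
  { replace (2 * l) with (l + l) by ring. rewrite exp_plus, HexpL.
    unfold mu. apply (Rmult_le_reg_r (D + lam)); [lra|].
    replace (rho0 / (D + lam) * (D * D) * (D + lam)) with (rho0 * D * D) by (field; lra).
    assert (Hx : (1 + k2) <= rho0 * D).
    { apply (Rmult_le_reg_l (exp (c0 * sg))); [apply exp_pos|].
      replace (exp (c0 * sg) * (rho0 * D)) with (D * (rho0 * exp (c0 * sg))) by ring.
      rewrite Hr0inv. lra. }
    nra. }
  pose proof (sol_pos _ _ _ _ _ _ Hsol Hmu) as Pos.
  pose proof Hsol as [Ha0 [Hb0 [Hc0' _]]].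
  assert (Hr0 : rfun d lam a b c 0 = rho0).
  { unfold rfun. rewrite Ha0, Hb0, Hc0'. fold D. unfold mu. field. lra. }
  assert (R32 : forall t, 0 <= t -> rfun d lam a b c t < 3/2).
  { apply (sol_r32 _ _ _ _ _ _ Hsol Hmu Hlam Hd). lra. }
  set (r := rfun d lam a b c) in *.
  assert (Hrdef : forall t, r t = a t + (1 + lam) * b t + (D - 2) * c t) by reflexivity.
  assert (Bb : forall t, 0 <= t -> (1 + lam) * b t < 3/2 /\ (D - 2) * c t < 3/2 /\ a t < 3/2
                  /\ (1 + lam) * b t <= r t /\ (D - 2) * c t <= r t /\ a t <= r t /\ c t <= (D-2) * c t /\ 0 < r t).
  { intros t Ht. destruct (Pos t Ht) as [Pa [Pb Pc]]. rewrite Hrdef. specialize (R32 t Ht). rewrite Hrdef in R32.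
    assert (0 < (1 + lam) * b t) by (apply Rmult_lt_0_compat; lra).
    assert (0 < (D - 2) * c t) by (apply Rmult_lt_0_compat; lra).
    repeat split; try lra. nra. }
  assert (Hc_small : forall t, 0 <= t -> c t <= rho / 4 /\ c t <= eps / 4).
  { intros t Ht. destruct (Bb t Ht) as [_ [HC _]].
    assert (c t <= 3 / (2 * (D - 2))).
    { apply (Rmult_le_reg_l (D - 2)); [lra|]. replace ((D - 2) * (3 / (2 * (D - 2)))) with (3/2) by (field; lra). lra. }
    lra. }
  pose proof (sol_a _ _ _ _ _ _ Hsol) as Da.
  pose proof (sol_b _ _ _ _ _ _ Hsol) as Db.
  pose proof (sol_c _ _ _ _ _ _ Hsol) as Dc.
  assert (Eb : forall t, eb d lam a b c t = 8 * ((1 + lam) * b t) * (1 - r t - 2 * ((1 + lam) * b t)))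
    by (intro t; unfold eb; fold r; ring).
  assert (Ec : forall t, ec d lam a b c t = 8 * c t * (1 - r t - 2 * c t))
    by (intro t; unfold ec; fold r; ring).
  assert (Ea : forall t, ea d lam a b c t = a t * (24 - 16 * a t - 8 * r t))
    by (intro t; unfold ea; fold r; ring).
  assert (Ga : forall t, 0 <= t -> a t <= mu * exp (24 * t)).
  { intros t Ht. replace (24 * t) with (24 * (t - 0)) by ring. rewrite <- Ha0.
    apply (growth_hi a (ea d lam a b c) 24 0 t Ht).
    - intros u Hu; apply Da; lra.
    - intros u Hu. rewrite Ea. destruct (Pos u ltac:(lra)) as [Pa _]. destruct (Bb u ltac:(lra)) as [_ [_ [_ [_ [_ [_ [_ Pr]]]]]]].
      nra. }
  assert (Gc : forall t, 0 <= t -> c t <= mu * exp (8 * t)).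
  { intros t Ht. replace (8 * t) with (8 * (t - 0)) by ring. rewrite <- Hc0'.
    apply (growth_hi c (ec d lam a b c) 8 0 t Ht).
    - intros u Hu; apply Dc; lra.
    - intros u Hu. rewrite Ec. destruct (Pos u ltac:(lra)) as [_ [_ Pc]]. destruct (Bb u ltac:(lra)) as [_ [_ [_ [_ [_ [_ [_ Pr]]]]]]].
      nra. }
  set (Th := 1 / (3 * k1) + (c0 * sg + ln (3 * (1 + k2))) / (4 * rho)
        + (1 + c0 * sg + ln (3 * (1 + k2))) / (4 * eps)) in *.
  assert (Hln3 : 0 <= ln (3 * (1 + k2))) by (rewrite <- ln_1; apply ln_le; lra).
  assert (Hsmall' : forall t, 0 <= t <= Th -> a t <= exp (- (l / 2))).
  { intros t Ht. apply Rle_trans with (mu * exp (24 * t)); [apply Ga; lra|].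
    assert (exp (24 * t) <= exp (l / 2)) by (apply exp_le_m; nra).
    assert (mu <= exp (- l)).
    { rewrite exp_Ropp, HexpL. apply (Rmult_le_reg_r D); [lra|]. rewrite Rinv_l by lra. lra. }
    assert (Eh : - (l / 2) = - l + l / 2) by lra. rewrite Eh, exp_plus.
    apply Rmult_le_compat; try lra; left; apply exp_pos. }
  assert (Hsmall : forall t, 0 <= t <= Th -> a t <= rho ^ 2).
  { intros t Ht. apply Rle_trans with (exp (- (l / 2))); [apply Hsmall'; auto| exact K5]. }
  set (tau0 := 1 / (3 * k1)).
  assert (Htau0 : 0 < tau0) by (unfold tau0; apply Rdiv_lt_0_compat; lra).
  assert (Hw1 : exists t1, 0 <= t1 <= tau0 /\ rho <= r t1).
  { destruct (classic (exists t1, 0 <= t1 <= tau0 /\ rho <= r t1)) as [|Hn]; auto. exfalso.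
    assert (Hlt : forall t, 0 <= t <= tau0 -> r t < rho).
    { intros t Ht. destruct (Rlt_le_dec (r t) rho); auto. exfalso; apply Hn; eauto. }
    assert (Hg := growth_lo b (eb d lam a b c) (6 * (1 + lam)) 0 tau0 (Rlt_le _ _ Htau0)).
    assert (b 0 * exp (6 * (1 + lam) * (tau0 - 0)) <= b tau0).
    { apply Hg. - intros u Hu; apply Db; lra.
      - intros u Hu. rewrite Eb. destruct (Pos u ltac:(lra)) as [_ [Pb _]].
        destruct (Bb u ltac:(lra)) as [_ [_ [_ [HB _]]]]. specialize (Hlt u ltac:(lra)).
        assert (0 < (1 + lam) * b u) by (apply Rmult_lt_0_compat; lra).
        nra. }
    assert (exp (2 * l) <= exp (6 * (1 + lam) * (tau0 - 0))).
    { apply exp_le_m. unfold tau0. replace (6 * (1 + lam) * (1 / (3 * k1) - 0)) with (2 * ((1 + lam) / k1)) by (field; lra).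
      apply Rmult_le_compat_l; [lra|]. apply (Rmult_le_reg_r k1); [lra|].
      replace ((1 + lam) / k1 * k1) with (1 + lam) by (field; lra). lra. }
    rewrite Hb0 in *.
    assert (1 <= b tau0).
    { apply Rle_trans with (mu * exp (2 * l)); auto. apply Rle_trans with (mu * exp (6 * (1 + lam) * (tau0 - 0))); auto.
      apply Rmult_le_compat_l; lra. }
    destruct (Bb tau0 ltac:(lra)) as [_ [_ [_ [HB _]]]]. specialize (Hlt tau0 ltac:(lra)).
    nra. }
  destruct Hw1 as [t1 [Ht1 Hrt1]].
  destruct (first_hit_ex (fun t => r t - rho) 0 t1 (proj1 Ht1)) as [T1a [HT1a HT1at1]].
  { intros t Ht. apply continuity_pt_minus; [apply (cont_r _ _ _ _ _ _ Hsol t Ht)| apply continuity_pt_const; intros ? ?; auto]. }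
  { lra. }
  apply (first_hit_iff _ (fun t => rho <= r t)) in HT1a; [|intros; simpl; split; intros; lra].
  pose proof HT1a as [HT1a0 [HrT1a HbT1a]].
  assert (HT1aTh : T1a <= Th) by (unfold Th; fold tau0; assert (0 <= (c0 * sg + ln (3 * (1 + k2))) / (4 * rho)) by (apply Rle_div_r; nra);
     assert (0 <= (1 + c0 * sg + ln (3 * (1 + k2))) / (4 * eps)) by (apply Rle_div_r; nra); lra).
  assert (HaT1a : a T1a <= rho / 4) by (assert (a T1a <= rho^2) by (apply Hsmall; lra); nra).
  assert (HDmu : (D - 2) * mu <= rho0).
  { unfold mu. apply (Rmult_le_reg_r (D + lam)); [lra|].
    replace ((D - 2) * (rho0 / (D + lam)) * (D + lam)) with ((D - 2) * rho0) by (field; lra). nra. }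
  assert (HCT1a : (D - 2) * c T1a <= rho / 4).
  { apply Rle_trans with ((D - 2) * (mu * exp (8 * tau0))).
    - apply Rmult_le_compat_l; [lra|]. apply Rle_trans with (mu * exp (8 * T1a)); [apply Gc; lra|].
      apply Rmult_le_compat_l; [lra|]. apply exp_le_m; lra.
    - apply Rle_trans with (rho0 * exp (8 / (3 * k1))).
      + replace (8 * tau0) with (8 / (3 * k1)) by (unfold tau0; field; lra).
        rewrite <- Rmult_assoc. apply Rmult_le_compat_r; [left; apply exp_pos|lra].
      + unfold rho0; rewrite <- exp_plus; exact K3. }
  assert (HBT1a : rho / 2 <= (1 + lam) * b T1a) by (rewrite Hrdef in HrT1a; lra).
  assert (HcT1a : mu <= c T1a).
  { rewrite <- Hc0'. apply (mono c (ec d lam a b c) 0 T1a HT1a0).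
    - intros; apply Dc; lra.
    - intros u Hu. rewrite Ec. destruct (Pos u ltac:(lra)) as [_ [_ Pc]].
      destruct (Bb u ltac:(lra)) as [_ [_ [_ [_ [HC [_ [Hcc _]]]]]]].
      assert (r u < rho) by (destruct (Rlt_le_dec (r u) rho); auto; exfalso; apply (HbT1a u); auto; lra).
      nra. }
  set (tau1 := (c0 * sg + ln (3 * (1 + k2))) / (4 * rho)).
  assert (Htau1 : 0 <= tau1) by (unfold tau1; apply Rle_div_r; nra).
  assert (P1 : forall t2, T1a <= t2 -> (forall u, T1a <= u < t2 -> 0 < eb d lam a b c u) ->
       (forall t, T1a <= t <= t2 -> rho / 2 <= (1 + lam) * b t) /\ c T1a * exp (4 * rho * (t2 - T1a)) <= c t2).
  { intros t2 Ht2 Heb.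
    assert (HB : forall t, T1a <= t <= t2 -> rho / 2 <= (1 + lam) * b t).
    { intros t Ht. assert (b T1a <= b t).
      { apply (mono b (eb d lam a b c) T1a t); [lra| intros; apply Db; lra| intros u Hu; left; apply Heb; lra]. }
      nra. }
    split; auto.
    apply (growth_lo c (ec d lam a b c) (4 * rho) T1a t2 Ht2).
    - intros; apply Dc; lra.
    - intros u Hu. rewrite Ec. destruct (Pos u ltac:(lra)) as [_ [Pb Pc]].
      specialize (Heb u ltac:(lra)). rewrite Eb in Heb.
      assert (0 < (1 + lam) * b u) by (apply Rmult_lt_0_compat; lra).
      assert (0 < 1 - r u - 2 * ((1 + lam) * b u)).
      { destruct (Rlt_le_dec 0 (1 - r u - 2 * ((1 + lam) * b u))); auto. nra. }
      specialize (HB u ltac:(lra)). destruct (Hc_small u ltac:(lra)).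
      nra. }
  assert (Hexp1 : exp (c0 * sg) * (3 * (1 + k2)) * ((D - 2) * mu) >= 1).
  { unfold mu. replace (exp (c0 * sg) * (3 * (1 + k2)) * ((D - 2) * (rho0 / (D + lam))))
       with ((rho0 * exp (c0 * sg)) * (3 * (1 + k2) * (D - 2)) / (D + lam)) by (field; lra).
    rewrite Hr0inv. apply Rle_ge. apply (Rmult_le_reg_r (D + lam)); [lra|].
    replace (1 * (3 * (1 + k2) * (D - 2)) / (D + lam) * (D + lam)) with (3 * (1 + k2) * (D - 2)) by (field; lra).
    nra. }
  assert (Hw2 : exists t2, T1a <= t2 <= T1a + tau1 /\ 0 <= - eb d lam a b c t2).
  { destruct (classic (exists t2, T1a <= t2 <= T1a + tau1 /\ 0 <= - eb d lam a b c t2)) as [|Hn]; auto. exfalso.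
    assert (Hpos : forall u, T1a <= u < T1a + tau1 -> 0 < eb d lam a b c u).
    { intros u Hu. destruct (Rlt_le_dec 0 (eb d lam a b c u)); auto. exfalso; apply Hn. exists u; split; [lra|lra]. }
    assert (Hend : 0 < eb d lam a b c (T1a + tau1)).
    { destruct (Rlt_le_dec 0 (eb d lam a b c (T1a + tau1))); auto. exfalso; apply Hn. exists (T1a + tau1); split; [lra|lra]. }
    destruct (P1 (T1a + tau1) ltac:(lra) Hpos) as [HB Hcg].
    replace (T1a + tau1 - T1a) with tau1 in Hcg by ring.
    assert (E4 : exp (4 * rho * tau1) = exp (c0 * sg) * (3 * (1 + k2))).
    { unfold tau1. replace (4 * rho * ((c0 * sg + ln (3 * (1 + k2))) / (4 * rho))) with (c0 * sg + ln (3 * (1 + k2))) by (field; lra).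
      rewrite exp_plus, exp_ln; auto; lra. }
    rewrite E4 in Hcg.
    assert (1 <= (D - 2) * c (T1a + tau1)).
    { apply Rle_trans with ((D - 2) * (c T1a * (exp (c0 * sg) * (3 * (1 + k2))))); [|apply Rmult_le_compat_l; lra].
      assert (0 < exp (c0 * sg)) by apply exp_pos. 
      assert (mu * (exp (c0 * sg) * (3 * (1 + k2))) <= c T1a * (exp (c0 * sg) * (3 * (1 + k2)))) by (apply Rmult_le_compat_r; nra).
      nra. }
    rewrite Eb in Hend. destruct (Pos (T1a + tau1) ltac:(lra)) as [Pa [Pb Pc]].
    assert (0 < (1 + lam) * b (T1a + tau1)) by (apply Rmult_lt_0_compat; lra).
    assert (0 < 1 - r (T1a + tau1) - 2 * ((1 + lam) * b (T1a + tau1))).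
    { destruct (Rlt_le_dec 0 (1 - r (T1a + tau1) - 2 * ((1 + lam) * b (T1a + tau1)))); auto. nra. }
    rewrite Hrdef in *. lra. }
  destruct Hw2 as [t2 [Ht2 Hebt2]].
  destruct (first_hit_ex (fun t => - eb d lam a b c t) T1a t2 (proj1 Ht2)) as [T1 [HT1 HT1t2]].
  { intros t Ht. apply (cont_eb _ _ _ _ _ _ Hsol t); lra. }
  { lra. }
  pose proof HT1 as [HT10 [HebT1 HbT1]].
  assert (HT1' : first_hit (fun t => Derive b t <= 0) T1a T1).
  { apply (first_hit_iff (fun t => 0 <= - eb d lam a b c t)); [|exact HT1].
    intros t Ht. assert (Ht0 : 0 <= t) by lra. rewrite (is_derive_unique _ _ _ (Db t Ht0)). split; intro; lra. }
  assert (Hpos1 : forall u, T1a <= u < T1 -> 0 < eb d lam a b c u).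
  { intros u Hu. destruct (Rlt_le_dec 0 (eb d lam a b c u)); auto. exfalso; apply (HbT1 u Hu); simpl; lra. }
  destruct (P1 T1 HT10 Hpos1) as [_ HcT1].
  assert (HcT1' : mu <= c T1).
  { assert (1 <= exp (4 * rho * (T1 - T1a))) by (rewrite <- exp_0; apply exp_le_m; nra).
    assert (0 < c T1a) by (destruct (Pos T1a ltac:(lra)) as [_ [_ ?]]; auto). nra. }
  set (tau2 := (1 + c0 * sg + ln (3 * (1 + k2))) / (4 * eps)).
  assert (Htau2 : 0 <= tau2) by (unfold tau2; apply Rle_div_r; nra).
  assert (He1 : 2 <= exp 1) by (pose proof (exp_ineq1 1 ltac:(lra)); lra).
  assert (Hw3 : exists t3, T1 <= t3 <= T1 + tau2 /\ 0 <= r t3 - (1 - eps)).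
  { destruct (classic (exists t3, T1 <= t3 <= T1 + tau2 /\ 0 <= r t3 - (1 - eps))) as [|Hn]; auto. exfalso.
    assert (Hlt : forall u, T1 <= u <= T1 + tau2 -> r u < 1 - eps).
    { intros u Hu. destruct (Rlt_le_dec (r u) (1 - eps)); auto. exfalso; apply Hn. exists u; split; [lra|lra]. }
    assert (Hcg : c T1 * exp (4 * eps * (T1 + tau2 - T1)) <= c (T1 + tau2)).
    { apply (growth_lo c (ec d lam a b c) (4 * eps) T1 (T1 + tau2)); [lra| intros; apply Dc; lra|].
      intros u Hu. rewrite Ec. destruct (Pos u ltac:(lra)) as [_ [_ Pc]].
      specialize (Hlt u ltac:(lra)). destruct (Hc_small u ltac:(lra)). nra. }
    replace (T1 + tau2 - T1) with tau2 in Hcg by ring.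
    assert (E4 : exp (4 * eps * tau2) = exp 1 * (exp (c0 * sg) * (3 * (1 + k2)))).
    { unfold tau2. replace (4 * eps * ((1 + c0 * sg + ln (3 * (1 + k2))) / (4 * eps))) with (1 + (c0 * sg + ln (3 * (1 + k2)))) by (field; lra).
      rewrite exp_plus, exp_plus, exp_ln; auto; lra. }
    rewrite E4 in Hcg.
    assert (2 <= (D - 2) * c (T1 + tau2)).
    { assert (0 < exp (c0 * sg)) by apply exp_pos.
      set (Q := exp (c0 * sg) * (3 * (1 + k2))) in *.
      assert (0 < Q) by (unfold Q; nra).
      assert (mu * (exp 1 * Q) <= c T1 * (exp 1 * Q)) by (apply Rmult_le_compat_r; nra).
      assert ((D - 2) * (mu * (exp 1 * Q)) <= (D - 2) * c (T1 + tau2)) by (apply Rmult_le_compat_l; lra).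
      assert (exp 1 <= (D - 2) * (mu * (exp 1 * Q))) by nra.
      lra. }
    destruct (Bb (T1 + tau2) ltac:(lra)) as [_ [HC _]]. lra. }
  destruct Hw3 as [t3 [Ht3 Hrt3]].
  destruct (first_hit_ex (fun t => r t - (1 - eps)) T1 t3 (proj1 Ht3)) as [T2a [HT2a HT2at3]].
  { intros t Ht. apply continuity_pt_minus; [apply (cont_r _ _ _ _ _ _ Hsol t); lra| apply continuity_pt_const; intros ? ?; auto]. }
  { lra. }
  apply (first_hit_iff _ (fun t => 1 - eps <= r t)) in HT2a; [|intros; simpl; split; intros; lra].
  pose proof HT2a as [HT2a0 [HrT2a HbT2a]].
  assert (HT2aTh : T2a <= Th) by (unfold Th; fold tau0; fold tau1; fold tau2; lra).
  set (al := a T2a).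
  assert (Hal1 : al <= exp (- (l / 2))) by (apply Hsmall'; lra).
  assert (Hal2 : al <= rho ^ 2) by (apply Hsmall; lra).
  assert (Hal3 : mu <= al).
  { unfold al. rewrite <- Ha0. apply (mono a (ea d lam a b c) 0 T2a); [lra| intros; apply Da; lra|].
    intros u Hu. rewrite Ea. destruct (Pos u ltac:(lra)) as [Pa _].
    assert (a u <= rho ^ 2) by (apply Hsmall; lra). specialize (R32 u ltac:(lra)).
    assert (rho ^ 2 <= 1 / 144) by nra. apply Rmult_le_pos; lra. }
  assert (Hal4 : exp (- (2 * l)) <= al).
  { apply Rle_trans with mu; auto. rewrite exp_Ropp. apply (Rmult_le_reg_r (exp (2 * l))); [apply exp_pos|].
    rewrite Rinv_l by (apply Rgt_not_eq, exp_pos). lra. }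
  assert (Hal0 : 0 < al) by lra.
  assert (Hlnrho : ln rho < 0) by (rewrite <- ln_1; apply ln_increasing; lra).
  assert (Hlnal1 : ln al <= - (l / 2)) by (rewrite <- (ln_exp (- (l / 2))); apply ln_le; auto).
  assert (Hlnal2 : - (2 * l) <= ln al) by (rewrite <- (ln_exp (- (2 * l))); apply ln_le; auto; apply exp_pos).
  assert (Hlnal3 : ln al <= 2 * ln rho).
  { replace (2 * ln rho) with (ln (rho ^ 2)) by (simpl; rewrite Rmult_1_r, ln_mult; lra). apply ln_le; auto. }
  set (tau3 := (ln rho - ln al) / 10).
  assert (Htau3 : 0 <= tau3) by (unfold tau3; lra).
  assert (Hw4 : exists t4, T2a <= t4 <= T2a + tau3 /\ 0 <= a t4 - rho).
  { destruct (classic (exists t4, T2a <= t4 <= T2a + tau3 /\ 0 <= a t4 - rho)) as [|Hn]; auto. exfalso.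
    assert (Hlt : forall u, T2a <= u <= T2a + tau3 -> a u < rho).
    { intros u Hu. destruct (Rlt_le_dec (a u) rho); auto. exfalso; apply Hn. exists u; split; [lra|lra]. }
    assert (Hag : a T2a * exp (10 * (T2a + tau3 - T2a)) <= a (T2a + tau3)).
    { apply (growth_lo a (ea d lam a b c) 10 T2a (T2a + tau3)); [lra| intros; apply Da; lra|].
      intros u Hu. rewrite Ea. destruct (Pos u ltac:(lra)) as [Pa _].
      specialize (Hlt u ltac:(lra)). specialize (R32 u ltac:(lra)). nra. }
    replace (T2a + tau3 - T2a) with tau3 in Hag by ring.
    assert (E5 : exp (10 * tau3) = rho / al).
    { unfold tau3. replace (10 * ((ln rho - ln al) / 10)) with (ln rho - ln al) by field.
      unfold Rminus. rewrite exp_plus, exp_Ropp, !exp_ln; auto; lra. }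
    rewrite E5 in Hag. fold al in Hag. replace (al * (rho / al)) with rho in Hag by (field; lra).
    specialize (Hlt (T2a + tau3) ltac:(lra)). lra. }
  destruct Hw4 as [t4 [Ht4 Hat4]].
  destruct (first_hit_ex (fun t => a t - rho) T2a t4 (proj1 Ht4)) as [T2 [HT2 HT2t4]].
  { intros t Ht. apply continuity_pt_minus; [apply (cont_a _ _ _ _ _ _ Hsol t); lra| apply continuity_pt_const; intros ? ?; auto]. }
  { lra. }
  apply (first_hit_iff _ (fun t => rho <= a t)) in HT2; [|intros; simpl; split; intros; lra].
  pose proof HT2 as [HT20 [HaT2 HbT2]].
  assert (Hup : T2 - T2a <= tau3) by lra.
  assert (Hlow : ln rho - ln al <= 24 * (T2 - T2a)).
  { assert (Hg : a T2 <= a T2a * exp (24 * (T2 - T2a))).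
    { apply (growth_hi a (ea d lam a b c) 24 T2a T2); [lra| intros; apply Da; lra|].
      intros u Hu. rewrite Ea. destruct (Pos u ltac:(lra)) as [Pa _].
      destruct (Bb u ltac:(lra)) as [_ [_ [_ [_ [_ [_ [_ Pr]]]]]]]. nra. }
    fold al in Hg.
    assert (Hln : ln rho <= ln (al * exp (24 * (T2 - T2a)))) by (apply ln_le; lra).
    rewrite ln_mult, ln_exp in Hln; auto; [lra| apply exp_pos]. }
  assert (HL : ln (1 / al) = - ln al) by (unfold Rdiv; rewrite Rmult_1_l, ln_Rinv; auto).
  exists T1a, T1, T2a, T2. fold r. split; [exact HT1a|]. split; [exact HT1'|]. split; [exact HT2a|]. split; [exact HT2|].
  fold al. rewrite HL. fold l. unfold tau3 in Hup.
  split; [split; lra|]. split; [split; lra|].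
  unfold Align. fold D.
  destruct (Pos T2 ltac:(lra)) as [Pa [Pb Pc]].
  destruct (Bb T2 ltac:(lra)) as [HB [HC _]].
  set (X := b T2 ^ 2 + (D - 2) * c T2 ^ 2).
  replace (a T2 ^ 2 + b T2 ^ 2 + (D - 2) * c T2 ^ 2) with (a T2 ^ 2 + X) by (unfold X; ring).
  assert (HX0 : 0 <= X) by (unfold X; assert (0 <= (D - 2) * c T2 ^ 2) by (apply Rmult_le_pos; [lra|apply pow2_ge_0]); assert (0 <= b T2 ^ 2) by apply pow2_ge_0; lra).
  apply Rle_trans with (X / (2 * rho ^ 2)); [apply align_bound; lra|].
  assert (Hb2 : b T2 ^ 2 * lam ^ 2 <= 9 / 4).
  { assert (Hy : b T2 * lam <= 3 / 2).
    { assert (b T2 * lam <= (1 + lam) * b T2) by (rewrite Rmult_plus_distr_r; lra). lra. }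
    assert (0 <= b T2 * lam) by (apply Rmult_le_pos; lra).
    replace (b T2 ^ 2 * lam ^ 2) with ((b T2 * lam) * (b T2 * lam)) by ring.
    replace (9/4) with (3/2 * (3/2)) by field. apply Rmult_le_compat; lra. }
  assert (Hc2 : (D - 2) * c T2 ^ 2 * (D - 2) <= 9 / 4).
  { assert (0 <= (D - 2) * c T2) by (apply Rmult_le_pos; lra).
    replace ((D - 2) * c T2 ^ 2 * (D - 2)) with (((D - 2) * c T2) * ((D - 2) * c T2)) by ring.
    replace (9/4) with (3/2 * (3/2)) by field. apply Rmult_le_compat; lra. }
  assert (Hr2 : 0 < rho ^ 2) by (apply pow_lt; lra).
  assert (Hl2 : 0 < lam ^ 2) by (apply pow_lt; lra).
  assert (E1 : X / (2 * rho ^ 2) = (b T2 ^ 2 * lam ^ 2) * (1 / (2 * rho ^ 2) / lam ^ 2)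
                 + ((D - 2) * c T2 ^ 2 * (D - 2)) * (1 / (2 * rho ^ 2) * / (D - 2))) by (unfold X; field; lra).
  rewrite E1.
  assert (E2 : 9 / (8 * rho ^ 2) / lam ^ 2 = 9 / 4 * (1 / (2 * rho ^ 2) / lam ^ 2)) by (field; lra).
  assert (E3 : 9 / (8 * rho ^ 2) * / (D - 2) = 9 / 4 * (1 / (2 * rho ^ 2) * / (D - 2))) by (field; lra).
  rewrite E2, E3.
  assert (0 <= 1 / (2 * rho ^ 2) / lam ^ 2).
  { apply Rmult_le_pos; [apply Rmult_le_pos; [lra| left; apply Rinv_0_lt_compat; lra]| left; apply Rinv_0_lt_compat; lra]. }
  assert (0 <= 1 / (2 * rho ^ 2) * / (D - 2)).
  { apply Rmult_le_pos; [apply Rmult_le_pos; [lra| left; apply Rinv_0_lt_compat; lra]| left; apply Rinv_0_lt_compat; lra]. }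
  apply Rplus_le_compat; apply Rmult_le_compat_r; lra.
Qed.


Lemma ln_le_2sqrt l : 1 <= l -> ln l <= 2 * sqrt l.
Proof.
  intro H. assert (Hs : 0 < sqrt l) by (apply sqrt_lt_R0; lra).
  assert (E : l = sqrt l * sqrt l) by (rewrite sqrt_sqrt; lra).
  rewrite E at 1. rewrite ln_mult by auto.
  assert (ln (sqrt l) < sqrt l).
  { rewrite <- (exp_ln (sqrt l)) at 2 by auto. set (y := ln (sqrt l)).
    destruct (Req_dec y 0) as [->|Hy]; [rewrite exp_0; lra|].
    pose proof (exp_ineq1 y Hy). lra. }
  lra.
Qed.

Lemma quad_bound M N x : 0 <= M -> 0 <= N -> 1 <= x -> M + N + 1 <= x -> M * x + N <= x * x.
Proof. intros. nra. Qed.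

Lemma delta_lim rho : is_lim_seq (fun n => 9 / (8 * rho ^ 2) * / (INR n - 2)) 0.
Proof.
  replace (Finite 0) with (Rbar_mult (9 / (8 * rho ^ 2)) 0) by (simpl; f_equal; ring).
  apply is_lim_seq_scal_l.
  replace (Finite 0) with (Rbar_inv p_infty) by reflexivity.
  apply is_lim_seq_inv; [|discriminate].
  apply (is_lim_seq_plus _ _ p_infty (-2)); [apply is_lim_seq_INR| apply is_lim_seq_const|]. reflexivity.
Qed.

Lemma Rmax_ge_l x y z : Rmax x y <= z -> x <= z.
Proof. intro H. pose proof (Rmax_l x y). lra. Qed.
Lemma Rmax_ge_r x y z : Rmax x y <= z -> y <= z.
Proof. intro H. pose proof (Rmax_r x y). lra. Qed.

Theorem propositionB6 :
  forall (c0 k1 k2 rho eps : R),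
    0 < c0 -> 0 < k1 -> 0 < k2 ->
    0 < rho < 1 / 12 -> 0 < eps <= 1 / 4 ->
  exists (A1 A2 B1 B2 C : R) (delta : nat -> R) (d0 : nat),
    0 < A1 /\ 0 < A2 /\ 0 < B1 /\ 0 < B2 /\ 0 < C /\
    is_lim_seq delta 0 /\
    forall (d : nat) (lam : R) (a b c : R -> R),
      (3 <= d)%nat -> (d0 <= d)%nat ->
      0 < lam -> k1 * ln (INR d) <= lam <= k2 * INR d ->
      is_solution d lam (Rpower (ln (INR d)) (- c0) / (INR d + lam)) a b c ->
      exists T1a T1 T2a T2 : R,
        first_hit (fun t => rho <= rfun d lam a b c t) 0 T1a /\
        first_hit (fun t => Derive b t <= 0) T1a T1 /\
        first_hit (fun t => 1 - eps <= rfun d lam a b c t) T1 T2a /\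
        first_hit (fun t => rho <= a t) T2a T2 /\
        (* (1) T2 - T2a = Theta(log(1/a(T2a))) = Theta(log d) *)
        A1 * ln (1 / a T2a) <= T2 - T2a <= A2 * ln (1 / a T2a) /\
        B1 * ln (INR d) <= T2 - T2a <= B2 * ln (INR d) /\
        (* (2) Align(T2) = 1 - O(lam^-2) - o(1) *)
        Rabs (Align d a b c T2 - 1) <= C / lam ^ 2 + delta d.
Proof.
  intros c0 k1 k2 rho eps Hc0 Hk1 Hk2 Hrho Heps.
  set (L3 := ln (3 * (1 + k2))).
  assert (HL3 : 0 <= L3) by (unfold L3; rewrite <- ln_1; apply ln_le; lra).
  assert (HL1 : 0 <= ln (1 + k2)) by (rewrite <- ln_1; apply ln_le; lra).
  set (P := 6 * c0 * (1 / rho + 1 / eps)).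
  assert (HP : 0 <= P).
  { unfold P. assert (0 < 1 / rho) by (apply Rdiv_lt_0_compat; lra).
    assert (0 < 1 / eps) by (apply Rdiv_lt_0_compat; lra). nra. }
  set (Q := 24 * (1 / (3 * k1) + L3 / (4 * rho) + (1 + L3) / (4 * eps))).
  assert (HQ : 0 <= Q).
  { unfold Q. assert (0 < 1 / (3 * k1)) by (apply Rdiv_lt_0_compat; lra).
    assert (0 <= L3 / (4 * rho)) by (apply Rle_div_r; lra).
    assert (0 <= (1 + L3) / (4 * eps)) by (apply Rle_div_r; lra). lra. }
  set (x0 := Rmax (1 + ln (1 + k2) + 2 * c0) (1 + 4 * P + 2 * Q)).
  set (s0 := (8 / (3 * k1) - ln (rho / 4)) / c0).
  set (l0 := Rmax (Rmax (Rmax 1 (ln (2 + 6 / rho + 6 / eps))) (Rmax (exp s0) (- 4 * ln rho))) (x0 * x0)).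
  destruct (INR_unbounded (exp l0)) as [n0 Hn0].
  exists (1/48), (1/10), (1/96), (1/5), (9 / (8 * rho ^ 2)), (fun n => 9 / (8 * rho ^ 2) * / (INR n - 2)), n0.
  split; [lra|]. split; [lra|]. split; [lra|]. split; [lra|].
  split; [apply Rdiv_lt_0_compat; [lra| assert (0 < rho ^ 2) by (apply pow_lt; lra); lra]|].
  split; [apply delta_lim|].
  intros d lam a b c Hd Hd0 Hlam Hlams Hsol.
  pose proof (INR_ge3 d Hd) as HD.
  assert (HDn : exp l0 < INR d) by (apply le_INR in Hd0; lra).
  assert (Hl0 : l0 <= ln (INR d)) by (rewrite <- (ln_exp l0); apply ln_le; [apply exp_pos| lra]).
  set (D := INR d) in *. set (l := ln D) in *.
  assert (HexpL : exp l = D) by (unfold l; apply exp_ln; lra).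
  assert (K0 : 1 <= l) by (apply Rmax_ge_l in Hl0; apply Rmax_ge_l in Hl0; apply Rmax_ge_l in Hl0; lra).
  assert (Hx : x0 <= sqrt l).
  { apply Rmax_ge_r in Hl0. rewrite <- (sqrt_square x0).
    - apply sqrt_le_1_alt; lra.
    - unfold x0. pose proof (Rmax_l (1 + ln (1 + k2) + 2 * c0) (1 + 4 * P + 2 * Q)). lra. }
  set (x := sqrt l) in *.
  assert (Hxx : x * x = l) by (apply sqrt_sqrt; lra).
  assert (Hx1 : 1 <= x) by (unfold x0 in Hx; pose proof (Rmax_l (1 + ln (1 + k2) + 2 * c0) (1 + 4 * P + 2 * Q)); lra).
  assert (Hsg : ln l <= 2 * x) by (apply ln_le_2sqrt; lra).
  set (sg := ln l) in *.
  assert (Hsg0 : 0 <= sg) by (unfold sg; rewrite <- ln_1; apply ln_le; lra).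
  apply (core c0 k1 k2 rho eps); auto; try change (INR d) with D; try change (ln D) with l; try change (ln l) with sg.
  -
    assert (HD2 : 2 + 6 / rho + 6 / eps <= D).
    { apply Rmax_ge_l in Hl0; apply Rmax_ge_l in Hl0; apply Rmax_ge_r in Hl0.
      rewrite <- HexpL. rewrite <- (exp_ln (2 + 6 / rho + 6 / eps)).
      - apply exp_le_m; lra.
      - assert (0 < 6 / rho) by (apply Rdiv_lt_0_compat; lra).
        assert (0 < 6 / eps) by (apply Rdiv_lt_0_compat; lra). lra. }
    assert (0 < 6 / eps) by (apply Rdiv_lt_0_compat; lra).
    apply (Rmult_le_reg_r (D - 2)); [lra|].
    replace (3 / (2 * (D - 2)) * (D - 2)) with (3 / 2) by (field; lra).
    replace (rho / 4 * (D - 2)) with (rho / 4 * (D - 2 - 6 / rho) + 3 / 2) by (field; lra).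
    assert (0 <= rho / 4 * (D - 2 - 6 / rho)) by (apply Rmult_le_pos; lra). lra.
  -
    assert (HD2 : 2 + 6 / rho + 6 / eps <= D).
    { apply Rmax_ge_l in Hl0; apply Rmax_ge_l in Hl0; apply Rmax_ge_r in Hl0.
      rewrite <- HexpL. rewrite <- (exp_ln (2 + 6 / rho + 6 / eps)).
      - apply exp_le_m; lra.
      - assert (0 < 6 / rho) by (apply Rdiv_lt_0_compat; lra).
        assert (0 < 6 / eps) by (apply Rdiv_lt_0_compat; lra). lra. }
    assert (0 < 6 / rho) by (apply Rdiv_lt_0_compat; lra).
    apply (Rmult_le_reg_r (D - 2)); [lra|].
    replace (3 / (2 * (D - 2)) * (D - 2)) with (3 / 2) by (field; lra).
    replace (eps / 4 * (D - 2)) with (eps / 4 * (D - 2 - 6 / eps) + 3 / 2) by (field; lra).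
    assert (0 <= eps / 4 * (D - 2 - 6 / eps)) by (apply Rmult_le_pos; lra). lra.
  -
    rewrite <- HexpL. rewrite <- (exp_ln (1 + k2)) at 1 by lra. rewrite <- exp_plus. apply exp_le_m.
    assert (2 * c0 * x + ln (1 + k2) <= x * x).
    { apply quad_bound; try lra. unfold x0 in Hx. pose proof (Rmax_l (1 + ln (1 + k2) + 2 * c0) (1 + 4 * P + 2 * Q)). lra. }
    nra.
  -
    assert (Hs0 : s0 <= sg).
    { apply Rmax_ge_l in Hl0; apply Rmax_ge_r in Hl0; apply Rmax_ge_l in Hl0.
      unfold sg. rewrite <- (ln_exp s0). apply ln_le; [apply exp_pos| lra]. }
    rewrite <- (exp_ln (rho / 4)) by lra. apply exp_le_m.
    unfold s0 in Hs0. apply (Rmult_le_compat_l c0) in Hs0; [|lra].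
    replace (c0 * ((8 / (3 * k1) - ln (rho / 4)) / c0)) with (8 / (3 * k1) - ln (rho / 4)) in Hs0 by (field; lra).
    lra.
  -
    fold L3.
    replace (24 * (1 / (3 * k1) + (c0 * sg + L3) / (4 * rho) + (1 + c0 * sg + L3) / (4 * eps))) with (P * sg + Q)
      by (unfold P, Q; field; lra).
    assert (4 * P * x + 2 * Q <= x * x).
    { apply quad_bound; try lra. unfold x0 in Hx. pose proof (Rmax_r (1 + ln (1 + k2) + 2 * c0) (1 + 4 * P + 2 * Q)). lra. }
    assert (P * sg <= P * (2 * x)) by (apply Rmult_le_compat_l; lra).
    lra.
  -
    assert (Hl4 : - 4 * ln rho <= l).
    { apply Rmax_ge_l in Hl0; apply Rmax_ge_r in Hl0; apply Rmax_ge_r in Hl0. lra. }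
    rewrite <- (exp_ln (rho ^ 2)) by (apply pow_lt; lra). apply exp_le_m.
    simpl. rewrite Rmult_1_r, ln_mult by lra. lra.
Qed.
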